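(* Let $\mathcal C$ be a monoidal category satisfying properties (1* ), (4* ), (5), (5* ), (5a* ), (6* ) and (9* ) below. Then for all objects $A,B$ of $\mathcal C$, every object of $\mathbf{TensMor}(A,B)^{\mathrm{op}}$ has an absolute value. In particular, every morphism $\psi\colon P\otimes A\to B$ in $\mathcal C$ has a cosupport.
   Context: $\mathbf{TensMor}(A,B)$: objects are morphisms $\psi\colon P\otimes A\to B$ ($P$ arbitrary), morphisms from $\psi_1\colon P_1\otimes A\to B$ to $\psi_2\colon P_2\otimes A\to B$ are $\tau\colon P_1\to P_2$ with $\psi_2(\tau\otimes\mathrm{id}_A)=\psi_1$. $\psi\colon P\otimes A\to B$ is a tensor monomorphism if for all $f,g\colon R\to P$, $\psi(f\otimes\mathrm{id}_A)=\psi(g\otimes\mathrm{id}_A)$ implies $f=g$ (i.e. $\psi$ is locally initial in $\mathbf{TensMor}(A,B)^{\mathrm{op}}$). The absolute value of $\psi$ (in $\mathbf{TensMor}(A,B)^{\mathrm{op}}$) is a tensor monomorphism $|\psi|\colon\tilde P\otimes A\to B$ with a morphism $\tau\colon P\to\tilde P$ satisfying $|\psi|(\tau\otimes\mathrm{id}_A)=\psi$, such that for every tensor monomorphism $\psi_1\colon P_1\otimes A\to B$ admitting $\sigma\colon P\to P_1$ with $\psi_1(\sigma\otimes\mathrm{id}_A)=\psi$ there exists $\kappa\colon\tilde P\to P_1$ with $\psi_1(\kappa\otimes\mathrm{id}_A)=|\psi|$; $\operatorname{cosupp}\psi:=\tilde P$ is the cosupport. Properties: (1* ) all small colimits; (4*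 ) cowellpowered; (5) $f$ mono implies $f\otimes\mathrm{id}_M$, $\mathrm{id}_M\otimes f$ mono; (5* ) $f$ epi implies $f\otimes\mathrm{id}_M$, $\mathrm{id}_M\otimes f$ epi; (5a* ) $f$ extremal epi implies $f\otimes f$ extremal epi (an epi $\pi$ is extremal if every factorization $\pi=if$ with $i$ mono has $i$ iso); (6* ) for every object $M$, $(-)\otimes M$ preserves colimits of families of extremal quotient objects of a fixed object; (9* ) for every object $M$, $(-)\otimes M$ preserves coequalizers. *)

(* Defs.v *)
Set Implicit Arguments.
Unset Strict Implicit.

Record Category := {
  Ob :> Type;
  Hom : Ob -> Ob -> Type;
  idm : forall A : Ob, Hom A A;
  comp : forall A B C : Ob, Hom B C -> Hom A B -> Hom A C;
  comp_id_l : forall A B (f : Hom A B), comp (idm B) f = f;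
  comp_id_r : forall A B (f : Hom A B), comp f (idm A) = f;
  comp_assoc : forall A B C D (f : Hom A B) (g : Hom B C) (h : Hom C D),
      comp h (comp g f) = comp (comp h g) f
}.
Arguments Hom {c} _ _.
Arguments idm {c} _.
Arguments comp {c A B C} _ _.
Notation "g \o f" := (comp g f) (at level 40, left associativity).

Section CatDefs.
Context {C : Category}.

Definition is_mono {A B : C} (f : Hom A B) : Prop :=
  forall (X : C) (g h : Hom X A), f \o g = f \o h -> g = h.

Definition is_epi {A B : C} (f : Hom A B) : Prop :=
  forall (X : C) (g h : Hom B X), g \o f = h \o f -> g = h.

Definition is_iso {A B : C} (f : Hom A B) : Prop :=
  exists g : Hom B A, g \o f = idm A /\ f \o g = idm B.

Definition is_extremal_epi {A B : C} (p : Hom A B) : Prop :=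
  is_epi p /\
  forall (D : C) (f : Hom A D) (i : Hom D B), is_mono i -> p = i \o f -> is_iso i.

End CatDefs.

(** * Smallness: a fixed universe of "small" types *)
Definition SmallType : Type := Type.

Record IndexCat := {
  I_ob : SmallType;
  I_hom : I_ob -> I_ob -> SmallType;
  I_id : forall j, I_hom j j;
  I_comp : forall i j k, I_hom j k -> I_hom i j -> I_hom i k;
  I_comp_id_l : forall i j (u : I_hom i j), I_comp (I_id j) u = u;
  I_comp_id_r : forall i j (u : I_hom i j), I_comp u (I_id i) = u;
  I_comp_assoc : forall i j k l (u : I_hom i j) (v : I_hom j k) (w : I_hom k l),
      I_comp w (I_comp v u) = I_comp (I_comp w v) u
}.

Record Diagram (J : IndexCat) (C : Category) := {
  D_ob : I_ob J -> Ob C;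
  D_hom : forall j k, I_hom j k -> Hom (D_ob j) (D_ob k);
  D_id : forall j, D_hom (I_id j) = idm (D_ob j);
  D_comp : forall i j k (u : I_hom i j) (v : I_hom j k),
      D_hom (I_comp v u) = D_hom v \o D_hom u
}.
Arguments D_ob {J C} _ _.
Arguments D_hom {J C} _ {j k} _.

Definition is_cocone {J : IndexCat} {C : Category} (D : Diagram J C)
  (X : C) (c : forall j, Hom (D_ob D j) X) : Prop :=
  forall j k (u : I_hom j k), c k \o D_hom D u = c j.
Arguments is_cocone {J C} D {X} c.

Definition is_colimit {J : IndexCat} {C : Category} (D : Diagram J C)
  (X : C) (c : forall j, Hom (D_ob D j) X) : Prop :=
  is_cocone D c /\
  forall (Y : C) (d : forall j, Hom (D_ob D j) Y), is_cocone D d ->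
    exists h : Hom X Y, (forall j, h \o c j = d j) /\
      forall h' : Hom X Y, (forall j, h' \o c j = d j) -> h' = h.
Arguments is_colimit {J C} D {X} c.

Definition has_small_colimits (C : Category) : Prop :=
  forall (J : IndexCat) (D : Diagram J C),
    exists (X : C) (c : forall j, Hom (D_ob D j) X), is_colimit D c.

(** [4*] cowellpowered: the quotient objects (epis out of X, up to
    isomorphism under X) of every object form a (small) set *)
Definition cowellpowered (C : Category) : Prop :=
  forall X : C, exists (I : SmallType) (Q : I -> Ob C) (e : forall i, Hom X (Q i)),
    (forall i, is_epi (e i)) /\
    forall (Y : C) (f : Hom X Y), is_epi f ->
      exists (i : I) (phi : Hom (Q i) Y), is_iso phi /\ phi \o e i = f.

Definition is_wide_pushout {C : Category} {X : C} {I : SmallType}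
  {Q : I -> Ob C} (e : forall i, Hom X (Q i))
  (Z : C) (z : Hom X Z) (q : forall i, Hom (Q i) Z) : Prop :=
  (forall i, q i \o e i = z) /\
  forall (Y : C) (y : Hom X Y) (r : forall i, Hom (Q i) Y),
    (forall i, r i \o e i = y) ->
    exists h : Hom Z Y, (h \o z = y /\ forall i, h \o q i = r i) /\
      forall h' : Hom Z Y, (h' \o z = y /\ forall i, h' \o q i = r i) -> h' = h.

Definition is_coequalizer {C : Category} {A B : C} (f g : Hom A B)
  (Q : C) (q : Hom B Q) : Prop :=
  q \o f = q \o g /\
  forall (Y : C) (y : Hom B Y), y \o f = y \o g ->
    exists h : Hom Q Y, h \o q = y /\ forall h' : Hom Q Y, h' \o q = y -> h' = h.

Record MonoidalCategory := {
  mcat :> Category;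
  tens : mcat -> mcat -> mcat;
  tensh : forall (A A' B B' : mcat), Hom A A' -> Hom B B' -> Hom (tens A B) (tens A' B');
  tens_id : forall A B : mcat, tensh (idm A) (idm B) = idm (tens A B);
  tens_comp : forall (A A' A'' B B' B'' : mcat) (f : Hom A A') (f' : Hom A' A'')
      (g : Hom B B') (g' : Hom B' B''),
      tensh (f' \o f) (g' \o g) = tensh f' g' \o tensh f g;
  munit : mcat;
  assoc : forall A B D : mcat, Hom (tens (tens A B) D) (tens A (tens B D));
  assoc_inv : forall A B D : mcat, Hom (tens A (tens B D)) (tens (tens A B) D);
  assoc_iso1 : forall A B D : mcat, assoc_inv A B D \o assoc A B D = idm _;
  assoc_iso2 : forall A B D : mcat, assoc A B D \o assoc_inv A B D = idm _;
  assoc_nat : forall (A A' B B' D D' : mcat) (f : Hom A A') (g : Hom B B') (h : Hom D D'),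
      assoc A' B' D' \o tensh (tensh f g) h = tensh f (tensh g h) \o assoc A B D;
  lunit : forall A : mcat, Hom (tens munit A) A;
  lunit_inv : forall A : mcat, Hom A (tens munit A);
  lunit_iso1 : forall A : mcat, lunit_inv A \o lunit A = idm _;
  lunit_iso2 : forall A : mcat, lunit A \o lunit_inv A = idm _;
  lunit_nat : forall (A A' : mcat) (f : Hom A A'),
      lunit A' \o tensh (idm munit) f = f \o lunit A;
  runit : forall A : mcat, Hom (tens A munit) A;
  runit_inv : forall A : mcat, Hom A (tens A munit);
  runit_iso1 : forall A : mcat, runit_inv A \o runit A = idm _;
  runit_iso2 : forall A : mcat, runit A \o runit_inv A = idm _;
  runit_nat : forall (A A' : mcat) (f : Hom A A'),
      runit A' \o tensh f (idm munit) = f \o runit A;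
  pentagon : forall A B D E : mcat,
      assoc A B (tens D E) \o assoc (tens A B) D E =
      tensh (idm A) (assoc B D E) \o assoc A (tens B D) E \o tensh (assoc A B D) (idm E);
  triangle : forall A B : mcat,
      tensh (idm A) (lunit B) \o assoc A munit B = tensh (runit A) (idm B)
}.
Arguments tens {m} _ _.
Arguments tensh {m A A' B B'} _ _.
Notation "A <x> B" := (tens A B) (at level 35).
Notation "f <*> g" := (tensh f g) (at level 35).

Section MonDefs.
Context {C : MonoidalCategory}.

Definition tens_preserves_mono : Prop :=
  forall (A B M : C) (f : Hom A B), is_mono f ->
    is_mono (f <*> idm M) /\ is_mono (idm M <*> f).

Definition tens_preserves_epi : Prop :=
  forall (A B M : C) (f : Hom A B), is_epi f ->
    is_epi (f <*> idm M) /\ is_epi (idm M <*> f).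

Definition tens_square_extremal_epi : Prop :=
  forall (A B : C) (f : Hom A B), is_extremal_epi f -> is_extremal_epi (f <*> f).

Definition tens_preserves_extremal_quotient_colimits : Prop :=
  forall (M X : C) (I : SmallType) (Q : I -> Ob C) (e : forall i, Hom X (Q i)),
    (forall i, is_extremal_epi (e i)) ->
    forall (Z : C) (z : Hom X Z) (q : forall i, Hom (Q i) Z),
      is_wide_pushout e z q ->
      is_wide_pushout (fun i => e i <*> idm M) (z <*> idm M) (fun i => q i <*> idm M).

Definition tens_preserves_coequalizers : Prop :=
  forall (M A B : C) (f g : Hom A B) (Q : C) (q : Hom B Q),
    is_coequalizer f g q -> is_coequalizer (f <*> idm M) (g <*> idm M) (q <*> idm M).

Definition tensor_mono {P A B : C} (psi : Hom (P <x> A) B) : Prop :=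
  forall (R : C) (f g : Hom R P), psi \o (f <*> idm A) = psi \o (g <*> idm A) -> f = g.

Definition is_absolute_value {P A B : C} (psi : Hom (P <x> A) B)
  (Pt : C) (abs : Hom (Pt <x> A) B) (tau : Hom P Pt) : Prop :=
  tensor_mono abs /\ abs \o (tau <*> idm A) = psi /\
  forall (P1 : C) (psi1 : Hom (P1 <x> A) B), tensor_mono psi1 ->
    (exists sigma : Hom P P1, psi1 \o (sigma <*> idm A) = psi) ->
    exists kappa : Hom Pt P1, psi1 \o (kappa <*> idm A) = abs.

Definition has_absolute_value {P A B : C} (psi : Hom (P <x> A) B) : Prop :=
  exists (Pt : C) (abs : Hom (Pt <x> A) B) (tau : Hom P Pt),
    is_absolute_value psi abs tau.

End MonDefs.
Arguments tens_preserves_mono : clear implicits.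
Arguments tens_preserves_epi : clear implicits.
Arguments tens_square_extremal_epi : clear implicits.
Arguments tens_preserves_extremal_quotient_colimits : clear implicits.
Arguments tens_preserves_coequalizers : clear implicits.

(* Main.v *)
Require Import Defs.
From Stdlib Require Import ProofIrrelevance ClassicalEpsilon.

Definition preIC (T : SmallType) (R : T -> T -> Prop) (Rr : forall a, R a a)
  (Rt : forall a b c, R b c -> R a b -> R a c) : IndexCat :=
  {| I_ob := T; I_hom := R; I_id := Rr; I_comp := Rt;
     I_comp_id_l := fun _ _ _ => proof_irrelevance _ _ _;
     I_comp_id_r := fun _ _ _ => proof_irrelevance _ _ _;
     I_comp_assoc := fun _ _ _ _ _ _ _ => proof_irrelevance _ _ _ |}.

Definition wpR {I : SmallType} (a b : option I) : Prop :=
  match a, b with None, _ => True | Some _, None => False | Some i, Some j => i = j end.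

Lemma wpR_refl {I : SmallType} (a : option I) : wpR a a.
Proof. destruct a; simpl; auto. Qed.

Lemma wpR_trans {I : SmallType} (a b c : option I) : wpR b c -> wpR a b -> wpR a c.
Proof. destruct a, b, c; simpl; intros; subst; auto; contradiction. Qed.

Definition wpOb {C : Category} {I : SmallType} (X : C) (Q : I -> Ob C) (a : option I) : C :=
  match a with None => X | Some i => Q i end.

Definition wpHom {C : Category} {I : SmallType} (X : C) (Q : I -> Ob C)
  (e : forall i, Hom X (Q i)) (a b : option I) :
  wpR a b -> Hom (wpOb X Q a) (wpOb X Q b) :=
  match a as a0, b as b0 return wpR a0 b0 -> Hom (wpOb X Q a0) (wpOb X Q b0) with
  | None, None => fun _ => idm X
  | None, Some j => fun _ => e j
  | Some i, None => fun h => False_rect _ h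
  | Some i, Some j => fun h => eq_rect i (fun k => Hom (Q i) (Q k)) (idm (Q i)) j h
  end.

Lemma eq_rect_idm {C : Category} {I : SmallType} (Q : I -> Ob C) (i : I) (p : i = i) :
  eq_rect i (fun k => Hom (Q i) (Q k)) (idm (Q i)) i p = idm (Q i).
Proof. rewrite (proof_irrelevance _ p eq_refl). reflexivity. Qed.

Definition wpIC (I : SmallType) : IndexCat :=
  preIC (option I) (@wpR I) (@wpR_refl I) (@wpR_trans I).

Lemma wpD_id {C : Category} {I : SmallType} (X : C) (Q : I -> Ob C)
  (e : forall i, Hom X (Q i)) :
  forall j : I_ob (wpIC I), wpHom X Q e j j (I_id j) = idm (wpOb X Q j).
Proof. intros [j|]; simpl; [apply eq_rect_idm | reflexivity]. Qed.

Lemma wpD_comp {C : Category} {I : SmallType} (X : C) (Q : I -> Ob C)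
  (e : forall i, Hom X (Q i)) :
  forall (i j k : I_ob (wpIC I)) (u : I_hom i j) (v : I_hom j k),
    wpHom X Q e i k (I_comp v u) = wpHom X Q e j k v \o wpHom X Q e i j u.
Proof.
  intros [i|] [j|] [k|] u v; simpl in *; try contradiction.
  - subst. rewrite !eq_rect_idm. symmetry; apply comp_id_l.
  - subst. rewrite eq_rect_idm. symmetry; apply comp_id_l.
  - symmetry; apply comp_id_r.
  - symmetry; apply comp_id_l.
Qed.

Definition wpDiag {C : Category} {I : SmallType} (X : C) (Q : I -> Ob C)
  (e : forall i, Hom X (Q i)) : Diagram (wpIC I) C :=
  @Build_Diagram (wpIC I) C (wpOb X Q) (wpHom X Q e) (wpD_id X Q e) (wpD_comp X Q e).

Lemma wide_pushout_exists (C : Category) (H1 : has_small_colimits C)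
  (X : C) (I : SmallType) (Q : I -> Ob C) (e : forall i, Hom X (Q i)) :
  exists (Z : C) (z : Hom X Z) (q : forall i, Hom (Q i) Z), is_wide_pushout e z q.
Proof.
  destruct (H1 _ (wpDiag X Q e)) as [Y [c [Hcoc Hun]]].
  exists Y, (c None), (fun i => c (Some i)). split.
  - intros i. exact (Hcoc None (Some i) Logic.I).
  - intros Y' y r Hr.
    set (d := fun a : option I => match a as a0 return Hom (wpOb X Q a0) Y' with
                                   | None => y | Some i => r i end).
    assert (Hd : is_cocone (wpDiag X Q e) d).
    { intros [a|] [b|] u; simpl in *; try contradiction.
      - subst. rewrite eq_rect_idm. apply comp_id_r.
      - apply Hr.
      - apply comp_id_r. }
    destruct (Hun Y' d Hd) as [h [Hh Hu]].
    exists h. split.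
    + split; [exact (Hh None) | intros i; exact (Hh (Some i))].
    + intros h' [E1 E2]. apply Hu. intros [i|]; simpl; auto.
Qed.

Inductive cq : Set := cqA | cqB0 | cqB1 | cqB2.

Definition cqRb (a b : cq) : bool :=
  match a, b with
  | cqA, cqA | cqB0, cqB0 | cqB1, cqB1 | cqB2, cqB2 => true
  | cqA, cqB1 | cqA, cqB2 | cqB0, cqB1 | cqB0, cqB2 => true
  | _, _ => false end.

Definition cqR (a b : cq) : Prop := cqRb a b = true.
Lemma cqR_refl a : cqR a a. Proof. destruct a; reflexivity. Qed.
Lemma cqR_trans a b c : cqR b c -> cqR a b -> cqR a c.
Proof. unfold cqR; destruct a, b, c; simpl; congruence. Qed.

Definition cqIC : IndexCat := preIC cq cqR cqR_refl cqR_trans.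

Definition cqOb {C : Category} (A B : C) (a : cq) : C :=
  match a with cqA => A | _ => B end.

Definition cqHom {C : Category} {A B : C} (f g : Hom A B) (a b : cq) :
  cqR a b -> Hom (cqOb A B a) (cqOb A B b) :=
  match a as a0, b as b0 return cqR a0 b0 -> Hom (cqOb A B a0) (cqOb A B b0) with
  | cqA, cqA => fun _ => idm A
  | cqB0, cqB0 => fun _ => idm B
  | cqB1, cqB1 => fun _ => idm B
  | cqB2, cqB2 => fun _ => idm B
  | cqA, cqB1 => fun _ => f
  | cqA, cqB2 => fun _ => g
  | cqB0, cqB1 => fun _ => idm B
  | cqB0, cqB2 => fun _ => idm B
  | _, _ => fun h => False_rect _ (Bool.diff_false_true h)
  end.

Lemma cqD_id {C : Category} {A B : C} (f g : Hom A B) :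
  forall j : I_ob cqIC, cqHom f g j j (I_id j) = idm (cqOb A B j).
Proof. intros []; reflexivity. Qed.

Lemma cqD_comp {C : Category} {A B : C} (f g : Hom A B) :
  forall (i j k : I_ob cqIC) (u : I_hom i j) (v : I_hom j k),
    cqHom f g i k (I_comp v u) = cqHom f g j k v \o cqHom f g i j u.
Proof.
  intros [] [] [] u v; simpl in *; unfold cqR in *; simpl in *; try discriminate;
  first [symmetry; apply comp_id_l | symmetry; apply comp_id_r].
Qed.

Definition cqDiag {C : Category} {A B : C} (f g : Hom A B) : Diagram cqIC C :=
  @Build_Diagram cqIC C (cqOb A B) (cqHom f g) (cqD_id f g) (cqD_comp f g).

Lemma coequalizer_exists (C : Category) (H1 : has_small_colimits C)
  (A B : C) (f g : Hom A B) : exists (Q : C) (q : Hom B Q), is_coequalizer f g q.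
Proof.
  destruct (H1 _ (cqDiag f g)) as [Y [c [Hcoc Hun]]].
  assert (EA1 : c cqB1 \o f = c cqA) by exact (Hcoc cqA cqB1 eq_refl).
  assert (EA2 : c cqB2 \o g = c cqA) by exact (Hcoc cqA cqB2 eq_refl).
  assert (E01 : c cqB1 \o idm B = c cqB0) by exact (Hcoc cqB0 cqB1 eq_refl).
  assert (E02 : c cqB2 \o idm B = c cqB0) by exact (Hcoc cqB0 cqB2 eq_refl).
  rewrite comp_id_r in E01, E02.
  assert (E12 : c cqB2 = c cqB1) by congruence.
  exists Y, (c cqB1). split.
  - etransitivity; [exact EA1|]. rewrite <- EA2. rewrite E12. reflexivity.
  - intros Y' y Hy.
    set (d := fun a : cq => match a as a0 return Hom (cqOb A B a0) Y' with
                              | cqA => y \o f | _ => y end).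
    assert (Hd : is_cocone (cqDiag f g) d).
    { intros [] [] u; simpl in *; unfold cqR in *; simpl in *; try discriminate;
      try apply comp_id_r; auto. }
    destruct (Hun Y' d Hd) as [h [Hh Hu]].
    exists h. split; [exact (Hh cqB1) |].
    intros h' E. apply Hu. intros []; simpl.
    + rewrite <- EA1. etransitivity; [apply comp_assoc|]. exact (f_equal (fun k => k \o f) E).
    + rewrite <- E01. exact E.
    + exact E.
    + rewrite E12. exact E.
Qed.

Definition is_strong_epi {C : Category} {X Y : C} (e : Hom X Y) : Prop :=
  is_epi e /\ forall (D E : C) (m : Hom D E) (a : Hom X D) (b : Hom Y E),
    is_mono m -> m \o a = b \o e -> exists d : Hom Y D, d \o e = a /\ m \o d = b.

Lemma strong_extremal {C : Category} {X Y : C} (e : Hom X Y) :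
  is_strong_epi e -> is_extremal_epi e.
Proof.
  intros [He Hs]. split; auto. intros D f i Hi E.
  destruct (Hs D Y i f (idm Y) Hi) as [d [Hd1 Hd2]].
  { rewrite comp_id_l. symmetry; exact E. }
  exists d. split; auto.
  apply Hi. rewrite comp_assoc, Hd2, comp_id_l, comp_id_r. reflexivity.
Qed.

Lemma strong_comp {C : Category} {X Y Z : C} (e1 : Hom X Y) (e2 : Hom Y Z) :
  is_strong_epi e1 -> is_strong_epi e2 -> is_strong_epi (e2 \o e1).
Proof.
  intros [He1 Hs1] [He2 Hs2]. split.
  - intros W g h E. apply He2, He1. rewrite <- !comp_assoc. exact E.
  - intros D E m a b Hm Hab.
    destruct (Hs1 D E m a (b \o e2) Hm) as [d1 [Hd1 Hd1']].
    { rewrite Hab. apply comp_assoc. }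
    destruct (Hs2 D E m d1 b Hm) as [d2 [Hd2 Hd2']].
    { exact Hd1'. }
    exists d2. split; auto. rewrite comp_assoc, Hd2. exact Hd1.
Qed.

Lemma iso_strong {C : Category} {X Y : C} (f : Hom X Y) (g : Hom Y X) :
  g \o f = idm X -> f \o g = idm Y -> is_strong_epi f.
Proof.
  intros E1 E2. split.
  - intros W u v E. rewrite <- (comp_id_r u), <- (comp_id_r v), <- E2, !comp_assoc, E.
    reflexivity.
  - intros D E m a b Hm Hab. exists (a \o g). split.
    + rewrite <- comp_assoc, E1. apply comp_id_r.
    + rewrite comp_assoc, Hab, <- comp_assoc, E2. apply comp_id_r.
Qed.

Lemma coeq_epi {C : Category} {A B Q : C} (f g : Hom A B) (q : Hom B Q) :
  is_coequalizer f g q -> is_epi q.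
Proof.
  intros [Eq Hu] W u v E.
  destruct (Hu W (u \o q)) as [h [Hh Hhu]].
  { rewrite <- !comp_assoc, Eq. reflexivity. }
  rewrite (Hhu u eq_refl). symmetry. apply Hhu. symmetry. exact E.
Qed.

Lemma coeq_strong {C : Category} {A B Q : C} (f g : Hom A B) (q : Hom B Q) :
  is_coequalizer f g q -> is_strong_epi q.
Proof.
  intros Hc. pose proof (coeq_epi _ _ _ Hc) as Hep. destruct Hc as [Eq Hu]. split; auto.
  intros D E m a b Hm Hab.
  destruct (Hu D a) as [h [Hh _]].
  { apply Hm. rewrite !comp_assoc, Hab, <- !comp_assoc, Eq. reflexivity. }
  exists h. split; auto. apply Hep. rewrite <- comp_assoc, Hh. exact Hab.
Qed.

Lemma wp_epi {C : Category} {X : C} {I : SmallType} {Q : I -> Ob C}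
  (e : forall i, Hom X (Q i)) (Z : C) (z : Hom X Z) (q : forall i, Hom (Q i) Z) :
  (forall i, is_epi (e i)) -> is_wide_pushout e z q -> is_epi z.
Proof.
  intros He [Hq Hu] W u v E.
  destruct (Hu W (u \o z) (fun i => u \o q i)) as [h [_ Hhu]].
  { intros i. rewrite <- comp_assoc, Hq. reflexivity. }
  rewrite (Hhu u). 2:{ split; auto. }
  symmetry. apply Hhu. split.
  - symmetry; exact E.
  - intros i. apply He. rewrite <- !comp_assoc, Hq. symmetry; exact E.
Qed.

Lemma wp_strong {C : Category} {X : C} {I : SmallType} {Q : I -> Ob C}
  (e : forall i, Hom X (Q i)) (Z : C) (z : Hom X Z) (q : forall i, Hom (Q i) Z) :
  (forall i, is_strong_epi (e i)) -> is_wide_pushout e z q -> is_strong_epi z.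
Proof.
  intros He Hwp.
  assert (Hz : is_epi z) by (apply (wp_epi e Z z q); [intros i; apply He | exact Hwp]).
  split; auto. destruct Hwp as [Hq Hu].
  intros D E m a b Hm Hab.
  assert (Hd : forall i, exists d, d \o e i = a /\ m \o d = b \o q i).
  { intros i. destruct (He i) as [_ Hs]. apply Hs; auto.
    rewrite Hab, <- comp_assoc, Hq. reflexivity. }
  set (d := fun i => proj1_sig (constructive_indefinite_description _ (Hd i))).
  assert (Hdp : forall i, d i \o e i = a /\ m \o d i = b \o q i).
  { intros i. exact (proj2_sig (constructive_indefinite_description _ (Hd i))). }
  destruct (Hu D a d) as [h [[Hh1 Hh2] _]].
  { intros i. apply Hdp. }
  exists h. split; auto.
  destruct (Hu E (b \o z) (fun i => b \o q i)) as [k [_ Hk]].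
  { intros i. rewrite <- comp_assoc, Hq. reflexivity. }
  rewrite (Hk b). 2:{ split; auto. }
  apply Hk. split.
  - rewrite <- comp_assoc, Hh1. exact Hab.
  - intros i. rewrite <- comp_assoc, Hh2. apply Hdp.
Qed.

Lemma tens_l {C : MonoidalCategory} {X Y Z M : C} (f : Hom X Y) (g : Hom Y Z) :
  (g \o f) <*> idm M = (g <*> idm M) \o (f <*> idm M).
Proof. rewrite <- tens_comp, comp_id_l. reflexivity. Qed.

Theorem theorem5p15 (C : MonoidalCategory)
  (H1 : has_small_colimits C)
  (H4 : cowellpowered C)
  (H5 : tens_preserves_mono C)
  (H5e : tens_preserves_epi C)
  (H5a : tens_square_extremal_epi C)
  (H6 : tens_preserves_extremal_quotient_colimits C)
  (H9 : tens_preserves_coequalizers C) :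
  forall (A B P : C) (psi : Hom (P <x> A) B), has_absolute_value psi.
Proof.
  intros A B P psi.
  destruct (H4 P) as [I [Q [e [He Hrep]]]].
  set (Gp := fun i : I => is_strong_epi (e i) /\
         (exists phi : Hom (Q i <x> A) B, psi = phi \o (e i <*> idm A)) /\
         (forall (P1 : C) (psi1 : Hom (P1 <x> A) B) (sigma : Hom P P1),
            tensor_mono psi1 -> psi1 \o (sigma <*> idm A) = psi ->
            exists r : Hom (Q i) P1, r \o e i = sigma)).
  set (J := {i : I | Gp i}).
  set (QJ := fun j : J => Q (proj1_sig j)).
  set (eJ := fun j : J => e (proj1_sig j) : Hom P (QJ j)).
  assert (HeJs : forall j, is_strong_epi (eJ j)) by (intros [i Hi]; apply Hi).
  destruct (wide_pushout_exists C H1 P J QJ eJ) as [Z [z [q Hwp]]].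
  assert (Hzs : is_strong_epi z) by exact (wp_strong eJ Z z q HeJs Hwp).
  assert (Hze : is_epi z) by apply Hzs.
  assert (HzAe : is_epi (z <*> idm A)) by apply (H5e _ _ A z Hze).
  pose proof (H6 A P J QJ eJ (fun j => strong_extremal _ (HeJs j)) Z z q Hwp) as Hwp'.
  assert (Hphi : forall j : J, exists phi : Hom (QJ j <x> A) B, phi \o (eJ j <*> idm A) = psi).
  { intros [i Hi]. destruct Hi as [Hi1 [[phi Ephi] Hi3]]. exists phi. symmetry. exact Ephi. }
  set (phis := fun j => proj1_sig (constructive_indefinite_description _ (Hphi j))).
  destruct Hwp' as [_ Hu'].
  destruct (Hu' B psi phis) as [h [[Eh _] _]].
  { intros j. exact (proj2_sig (constructive_indefinite_description _ (Hphi j))). }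
  assert (Huniv : forall (P1 : C) (psi1 : Hom (P1 <x> A) B) (sigma : Hom P P1),
            tensor_mono psi1 -> psi1 \o (sigma <*> idm A) = psi ->
            exists kappa : Hom Z P1, kappa \o z = sigma /\ psi1 \o (kappa <*> idm A) = h).
  { intros P1 psi1 sigma Htm Hs.
    assert (Hr : forall j : J, exists r : Hom (QJ j) P1, r \o eJ j = sigma).
    { intros [i Hi0]. destruct Hi0 as [Hi1 [Hi2 Hi]]. exact (Hi P1 psi1 sigma Htm Hs). }
    set (rs := fun j => proj1_sig (constructive_indefinite_description _ (Hr j))).
    destruct Hwp as [_ Hu].
    destruct (Hu P1 sigma rs) as [k [[Ek _] _]].
    { intros j. exact (proj2_sig (constructive_indefinite_description _ (Hr j))). }
    exists k. split; auto.
    apply HzAe. rewrite <- comp_assoc, <- tens_l, Ek, Hs. symmetry. exact Eh. }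
  exists Z, h, z. split; [| split; [exact Eh |]].
  -
    intros R f g Hfg.
    destruct (coequalizer_exists C H1 R Z f g) as [Q' [c Hc]].
    pose proof (H9 A R Z f g Q' c Hc) as HcA.
    destruct HcA as [_ HcAu].
    destruct (HcAu B h Hfg) as [h' [Eh' _]].
    assert (Hw : is_strong_epi (c \o z)) by exact (strong_comp _ _ Hzs (coeq_strong _ _ _ Hc)).
    destruct (Hrep Q' (c \o z) (proj1 Hw)) as [i [phi [[phinv [Ep1 Ep2]] Ephi]]].
    assert (Hei : e i = phinv \o (c \o z)).
    { rewrite <- Ephi, comp_assoc, Ep1, comp_id_l. reflexivity. }
    assert (HGi : Gp i).
    { split; [| split].
      - rewrite Hei. apply strong_comp; auto. exact (iso_strong phinv phi Ep2 Ep1).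
      - exists (h' \o (phi <*> idm A)).
        rewrite <- comp_assoc, <- tens_l, Ephi, tens_l, comp_assoc, Eh', Eh. reflexivity.
      - intros P1 psi1 sigma Htm Hs.
        destruct (Huniv P1 psi1 sigma Htm Hs) as [k [Ek Ekh]].
        destruct Hc as [_ Hcu].
        destruct (Hcu P1 k) as [k' [Ek' _]].
        { apply Htm. rewrite !tens_l, !comp_assoc, Ekh. exact Hfg. }
        exists (k' \o phi). rewrite <- comp_assoc, Ephi, comp_assoc, Ek'. exact Ek. }
    set (j := exist _ i HGi : J).
    destruct Hwp as [Hq _].
    assert (Eqj : q j \o e i = z) by exact (Hq j).
    assert (Hret : q j \o phinv \o c = idm Z).
    { apply Hze. rewrite comp_id_l. rewrite Hei in Eqj. rewrite <- Eqj at 2. rewrite !comp_assoc. reflexivity. }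
    rewrite <- (comp_id_l f), <- (comp_id_l g), <- Hret, <- !comp_assoc.
    destruct Hc as [Ec _]. rewrite Ec. reflexivity.
  - intros P1 psi1 Htm [sigma Hs].
    destruct (Huniv P1 psi1 sigma Htm Hs) as [k [_ Ek]]. exists k. exact Ek.
Qed.
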